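(* In any execution of Algorithm $\mathsf{AG}$ (described in the context) with a guild, every process in the maximal guild sends a $\mathrm{DistributeT}$ message.
   Context: System model: a finite set $\mathcal{P}=\{p_1,\dots,p_n\}$ of processes communicating asynchronously over authenticated point-to-point links; every message sent from a correct process to a correct process is eventually delivered. A process that follows its protocol is correct; others (faulty, Byzantine) may behave arbitrarily. $F\subseteq\mathcal{P}$ denotes the (unknown) set of faulty processes of an execution. For $\mathcal{A}\subseteq 2^{\mathcal{P}}$, write $\mathcal{A}^*=\{A' : A'\subseteq A,\ A\in\mathcal{A}\}$. An asymmetric fail-prone system is an array $\mathbb{F}=[\mathcal{F}_1,\dots,\mathcal{F}_n]$ with $\mathcal{F}_i\subseteq 2^{\mathcal{P}}$. An asymmetric Byzantine quorum system for $\mathbb{F}$ is an array $\mathbb{Q}=[\mathcal{Q}_1,\dots,\mathcal{Q}_n]$ with $\mathcal{Q}_i\subseteq 2^{\mathcal{P}}$ (quorums for $p_i$) satisfying: (consistency) for all $i,j$, all $Q_i\in\mathcal{Q}_i$, $Q_j\in\mathcal{Q}_j$, $F_{ij}\in\mathcal{F}_i^*\cap\mathcal{F}_j^*$: $Q_i\cap Q_j\not\subseteq F_{ij}$; (availability) for all $i$ and $F_i\in\mathcal{F}_i$ there is $Q_i\in\mathcal{Q}_i$ with $F_i\cap Q_i=\emptyset$. A kernel for $p_i$ is a set $K\subseteq\mathcal{P}$ intersecting every $Q\in\mathcal{Q}_i$; $\mathcal{K}_i$ is the set of kernels for $p_i$. A correct process $p_i$ is wise if $F\in\mathcal{F}_i^*$.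 A guild is a set $\mathcal{G}$ of wise processes such that every $p_i\in\mathcal{G}$ has some $Q_i\in\mathcal{Q}_i$ with $Q_i\subseteq\mathcal{G}$. An execution with a guild is one in which a nonempty guild exists; the maximal guild $\mathcal{G}_{max}$ is the union of all guilds. Asymmetric reliable broadcast (arb-broadcast / arb-deliver) guarantees, in every execution with a guild: if a correct process arb-broadcasts $m$, every process of $\mathcal{G}_{max}$ eventually arb-delivers $m$; for each sender, all processes of $\mathcal{G}_{max}$ that arb-deliver from it deliver the same message; if some process of $\mathcal{G}_{max}$ arb-delivers a message from a sender, all processes of $\mathcal{G}_{max}$ eventually arb-deliver a message from that sender; a correct process arb-delivers at most one message per sender, and from a correct sender only a message it arb-broadcast. Algorithm $\mathsf{AG}$ (code of $p_i$; each correct process invokes ag-propose$(x_i)$ exactly once; each guarded ''upon there being ...'' action executes at most once, message handlers once per message). State: sets $S_i,T_i,U_i$ initially empty, boolean $sentT$ initially false. (1) Upon ag-propose$(x_i)$: arb-broadcast $(p_i,x_i)$. (2) Upon arb-delivering $(p_j,x_j)$ from $p_j$: $S_i\gets S_i\cup\{(p_j,x_j)\}$. (3) Upon there being $Q\in\mathcal{Q}_i$ such that for every $p_j\in Q$ some pair $(p_j,\cdot)\in S_i$: send $\langle\mathrm{DistributeS},p_i,S_i\rangle$ to all. (4) For a received $\langle\mathrm{DistributeS},p_j,S_j\rangle$: once $S_j\subseteq S_i$, provided $sentT$ is false at that moment, set $T_i\gets T_i\cup S_j$ and send $\langle\mathrm{Ack},p_i\rangle$ to $p_j$. (5) Upon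 Ack received from every member of some $Q\in\mathcal{Q}_i$: send Ready to all. (6) Upon Ready received from every member of some $Q\in\mathcal{Q}_i$: send Confirm to all. (7) Upon Confirm received from every member of some $K\in\mathcal{K}_i$: send Confirm to all. (8) Upon Confirm received from every member of some $Q\in\mathcal{Q}_i$: send $\langle\mathrm{DistributeT},p_i,T_i\rangle$ to all and set $sentT\gets$ true. (9) For a received $\langle\mathrm{DistributeT},p_j,T_j\rangle$ from $p_j$: once $T_j\subseteq S_i$, set $U_i\gets U_i\cup T_j$. (10) Upon DistributeT received from every member of some $Q\in\mathcal{Q}_i$: ag-deliver$(U_i)$. *)

(* Defs.v *)
From Stdlib Require Import List.
From mathcomp Require Import all_boot.
Set Implicit Arguments. Unset Strict Implicit. Unset Printing Implicit Defensive.

Section AsymQuorums.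
Variable P : finType.

Definition in_star (A : {set {set P}}) (X : {set P}) : bool :=
  [exists B in A, X \subset B].

Definition abqs (Fp Qs : P -> {set {set P}}) : Prop :=
  (forall (i j : P) (Qi Qj Fij : {set P}),
      Qi \in Qs i -> Qj \in Qs j -> in_star (Fp i) Fij -> in_star (Fp j) Fij ->
      ~~ (Qi :&: Qj \subset Fij)) /\
  (forall (i : P) (Fi : {set P}), Fi \in Fp i ->
      exists2 Qi, Qi \in Qs i & [disjoint Fi & Qi]).

Definition quorum_in (Qi : {set {set P}}) (X : {set P}) : bool :=
  [exists Q in Qi, Q \subset X].

Definition is_kernel (Qi : {set {set P}}) (K : {set P}) : bool :=
  [forall Q in Qi, K :&: Q != set0].

Definition kernel_in (Qi : {set {set P}}) (X : {set P}) : bool :=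
  [exists K : {set P}, is_kernel Qi K && (K \subset X)].

Variables (Fp Qs : P -> {set {set P}}) (F : {set P}).

Definition wise (i : P) : Prop := i \notin F /\ in_star (Fp i) F.

Definition guild (G : {set P}) : Prop :=
  forall i, i \in G -> wise i /\ quorum_in (Qs i) G.

Definition in_Gmax (i : P) : Prop := exists G, guild G /\ i \in G.

Definition has_guild : Prop := exists G, guild G /\ G != set0.
End AsymQuorums.

Section Algorithm.
Variables (P : finType) (V : eqType).

(* finite sets of pairs (p_j, x_j), represented by sequences (membership) *)
Definition pset := seq (P * V).

(* point-to-point messages; the process identifier field is the (authenticated)
   sender of the message *)
Inductive msg :=
  | MDS of pset        (* <DistributeS, p_j, S_j> *)
  | MAck
  | MReady
  | MConfirm
  | MDT of pset.       (* <DistributeT, p_j, T_j> *)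

(* guarded actions; A4 j t0 / A9 j t0 handle the DistributeS / DistributeT
   message received from j that j sent at time t0 *)
Inductive act := A3 | A4 of P & nat | A5 | A6 | A7 | A8 | A9 of P & nat | A10.

Inductive event :=
  | EPropose of P                    (* ag-propose(x_i) by p_i: arb-broadcast (p_i,x_i) *)
  | EArbDel of P & P & (P * V)       (* EArbDel i j m : p_i arb-delivers m from p_j *)
  | ERecv of P & P & nat & msg       (* ERecv i j t0 m : p_i receives m from p_j, sent at t0 *)
  | EAct of P & act
  | ESkip.

Definition ev_proc (e : event) : option P :=
  match e with
  | EPropose i | EArbDel i _ _ | ERecv i _ _ _ | EAct i _ => Some i
  | ESkip => None
  end.

Record lstate := LState {
  proposed : bool;
  Sset : pset; Tset : pset; Uset : pset;
  sentT : bool;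
  done3 : bool; done5 : bool; done6 : bool; done7 : bool;
  delivered : option pset;
  pendDS : seq (P * nat * pset);
  pendDT : seq (P * nat * pset);
  ackFrom : {set P}; readyFrom : {set P}; confFrom : {set P}; dtFrom : {set P}
}.

Definition init_state : lstate :=
  LState false [::] [::] [::] false false false false false None [::] [::]
         set0 set0 set0 set0.

Definition hasS (j : P) (S : pset) : bool := has (fun p => p.1 == j) S.
Definition subseteq (A B : pset) : bool := all (fun p => p \in B) A.

Definition find_pend (j : P) (t0 : nat) (pd : seq (P * nat * pset)) : option pset :=
  ohead [seq e.2 | e <- pd & e.1 == (j, t0)].
Definition rem_pend (j : P) (t0 : nat) (pd : seq (P * nat * pset)) :=
  [seq e <- pd | e.1 != (j, t0)].

Definition bcast (m : msg) : seq (P * msg) := [seq (k, m) | k <- enum P].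

Definition enabled (Qi : {set {set P}}) (s : lstate) (a : act) : bool :=
  match a with
  | A3 => ~~ done3 s && [exists Q in Qi, [forall j in Q, hasS j (Sset s)]]
  | A4 j t0 => if find_pend j t0 (pendDS s) is Some Sj then subseteq Sj (Sset s) else false
  | A5 => ~~ done5 s && quorum_in Qi (ackFrom s)
  | A6 => ~~ done6 s && quorum_in Qi (readyFrom s)
  | A7 => ~~ done7 s && kernel_in Qi (confFrom s)
  | A8 => ~~ sentT s && quorum_in Qi (confFrom s)
  | A9 j t0 => if find_pend j t0 (pendDT s) is Some Tj then subseteq Tj (Sset s) else false
  | A10 => (delivered s == None) && quorum_in Qi (dtFrom s)
  end.

Definition step (s : lstate) (e : event) : lstate * seq (P * msg) :=
  let: LState pr S0 T0 U0 sT d3 d5 d6 d7 dl pDS pDT aF rF cF dF := s in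
  match e with
  | EPropose _ => (LState true S0 T0 U0 sT d3 d5 d6 d7 dl pDS pDT aF rF cF dF, [::])
  | EArbDel _ _ m => (LState pr (m :: S0) T0 U0 sT d3 d5 d6 d7 dl pDS pDT aF rF cF dF, [::])
  | ERecv _ j t0 m =>
      match m with
      | MDS Sj => (LState pr S0 T0 U0 sT d3 d5 d6 d7 dl ((j, t0, Sj) :: pDS) pDT aF rF cF dF, [::])
      | MAck => (LState pr S0 T0 U0 sT d3 d5 d6 d7 dl pDS pDT (j |: aF) rF cF dF, [::])
      | MReady => (LState pr S0 T0 U0 sT d3 d5 d6 d7 dl pDS pDT aF (j |: rF) cF dF, [::])
      | MConfirm => (LState pr S0 T0 U0 sT d3 d5 d6 d7 dl pDS pDT aF rF (j |: cF) dF, [::])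
      | MDT Tj => (LState pr S0 T0 U0 sT d3 d5 d6 d7 dl pDS ((j, t0, Tj) :: pDT) aF rF cF (j |: dF), [::])
      end
  | EAct _ a =>
      match a with
      | A3 => (LState pr S0 T0 U0 sT true d5 d6 d7 dl pDS pDT aF rF cF dF, bcast (MDS S0))
      | A4 j t0 =>
          let Sj := odflt [::] (find_pend j t0 pDS) in
          if ~~ sT then
            (LState pr S0 (Sj ++ T0) U0 sT d3 d5 d6 d7 dl (rem_pend j t0 pDS) pDT aF rF cF dF,
             [:: (j, MAck)])
          else (LState pr S0 T0 U0 sT d3 d5 d6 d7 dl (rem_pend j t0 pDS) pDT aF rF cF dF, [::])
      | A5 => (LState pr S0 T0 U0 sT d3 true d6 d7 dl pDS pDT aF rF cF dF, bcast MReady)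
      | A6 => (LState pr S0 T0 U0 sT d3 d5 true d7 dl pDS pDT aF rF cF dF, bcast MConfirm)
      | A7 => (LState pr S0 T0 U0 sT d3 d5 d6 true dl pDS pDT aF rF cF dF, bcast MConfirm)
      | A8 => (LState pr S0 T0 U0 true d3 d5 d6 d7 dl pDS pDT aF rF cF dF, bcast (MDT T0))
      | A9 j t0 =>
          let Tj := odflt [::] (find_pend j t0 pDT) in
          (LState pr S0 T0 (Tj ++ U0) sT d3 d5 d6 d7 dl pDS (rem_pend j t0 pDT) aF rF cF dF, [::])
      | A10 => (LState pr S0 T0 U0 sT d3 d5 d6 d7 (Some U0) pDS pDT aF rF cF dF, [::])
      end
  | ESkip => (s, [::])
  end.

Section Execution.
Variables (Fp Qs : P -> {set {set P}}) (F : {set P}) (x : P -> V)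
          (ev : nat -> event) (cfg : nat -> P -> lstate).

Definition correct (i : P) : Prop := i \notin F.

Definition out (t : nat) (i : P) : seq (P * msg) :=
  if ev_proc (ev t) == Some i then (step (cfg t i) (ev t)).2 else [::].

Definition allowed (t : nat) (i : P) : Prop :=
  match ev t with
  | EPropose _ => ~~ proposed (cfg t i)
  | EAct _ a => enabled (Qs i) (cfg t i) a
  | ERecv _ j t0 m => j \in F \/ (t0 < t /\ In (i, m) (out t0 j))
  | _ => True
  end.

Definition arb_bcast (t : nat) (j : P) (m : P * V) : Prop :=
  ev t = EPropose j /\ m = (j, x j).
Definition arb_del (t : nat) (i j : P) (m : P * V) : Prop := ev t = EArbDel i j m.

Definition arb_spec : Prop :=
  (forall t j m i, correct j -> arb_bcast t j m -> in_Gmax Fp Qs F i ->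
      exists t', arb_del t' i j m) /\
  (forall t t' i k j m m', in_Gmax Fp Qs F i -> in_Gmax Fp Qs F k ->
      arb_del t i j m -> arb_del t' k j m' -> m = m') /\
  (forall t i j m k, in_Gmax Fp Qs F i -> arb_del t i j m -> in_Gmax Fp Qs F k ->
      exists t' m', arb_del t' k j m') /\
  (forall t t' i j m m', correct i -> arb_del t i j m -> arb_del t' i j m' -> t = t') /\
  (forall t i j m, correct i -> correct j -> arb_del t i j m ->
      exists t', arb_bcast t' j m).

Record AG_execution : Prop := {
  ex_init : forall i, correct i -> cfg 0 i = init_state;
  ex_step : forall t i, correct i -> ev_proc (ev t) = Some i ->
              allowed t i /\ cfg t.+1 i = (step (cfg t i) (ev t)).1;
  ex_idle : forall t i, correct i -> ev_proc (ev t) <> Some i -> cfg t.+1 i = cfg t i;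
  ex_nodup : forall t t' i j t0 m, correct i ->
              ev t = ERecv i j t0 m -> ev t' = ERecv i j t0 m -> t = t';
  ex_net : forall t0 j k m, correct j -> correct k -> In (k, m) (out t0 j) ->
              exists t, ev t = ERecv k j t0 m;
  (* every correct process invokes ag-propose (at most once by the guard) *)
  ex_propose : forall i, correct i -> exists t, ev t = EPropose i;
  ex_fair : forall t i a, correct i -> enabled (Qs i) (cfg t i) a ->
              exists2 t', t <= t' & ev t' = EAct i a;
  ex_arb : has_guild Fp Qs F -> arb_spec
}.

End Execution.
End Algorithm.

(* Main.v *)
Require Import Defs.
From Stdlib Require Import List Classical.
From mathcomp Require Import all_boot.
Set Implicit Arguments. Unset Strict Implicit. Unset Printing Implicit Defensive.

Section Proof.
Variables (P : finType) (V : eqType) (Fp Qs : P -> {set {set P}})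
  (F : {set P}) (x : P -> V) (ev : nat -> event P V) (cfg : nat -> P -> lstate P V).
Hypothesis Hq : abqs Fp Qs.
Hypothesis Hex : AG_execution Fp Qs F x ev cfg.
Hypothesis Hg : has_guild Fp Qs F.

Lemma In_mem (T : eqType) (y : T) s : y \in s -> In y s.
Proof. elim: s => //= a s IH; rewrite inE => /orP [/eqP->|/IH]; auto. Qed.

Lemma In_bcast (m : msg P V) k : In (k, m) (bcast m).
Proof. apply/in_map_iff. exists k; split => //; apply: In_mem; by rewrite mem_enum. Qed.

Lemma In_bcast_inv (m m' : msg P V) k : In (k, m') (bcast m) -> m' = m.
Proof. by move=> /in_map_iff [k' [[_ ->]] _]. Qed.

Lemma cfg_next t i : correct F i ->
  (ev_proc (ev t) = Some i /\ allowed Qs F ev cfg t i /\ cfg t.+1 i = (step (cfg t i) (ev t)).1) \/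
  (ev_proc (ev t) <> Some i /\ cfg t.+1 i = cfg t i).
Proof.
move=> ci; case: (ev_proc (ev t) =P Some i) => h.
  by left; have [? ?] := ex_step Hex ci h.
by right; split => //; apply: (ex_idle Hex ci h).
Qed.

Lemma inv_gen i (I : nat -> lstate P V -> Prop) : correct F i ->
  I 0 (@init_state P V) ->
  (forall t s, I t s -> I t.+1 s) ->
  (forall t, ev_proc (ev t) = Some i -> allowed Qs F ev cfg t i -> I t (cfg t i) ->
     I t.+1 (step (cfg t i) (ev t)).1) ->
  forall t, I t (cfg t i).
Proof.
move=> ci I0 Imono Istep; elim=> [|t IH]; first by rewrite (ex_init Hex ci).
case: (cfg_next t ci) => [[h1 [h2 ->]]|[_ ->]]; auto.
Qed.

Lemma mono_gen i (R : lstate P V -> lstate P V -> Prop) : correct F i ->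
  (forall s, R s s) -> (forall a b c, R a b -> R b c -> R a c) ->
  (forall s e, R s (step s e).1) ->
  forall t t', t <= t' -> R (cfg t i) (cfg t' i).
Proof.
move=> ci Rr Rt Rs t; elim=> [|t' IH]; first by rewrite leqn0 => /eqP->.
rewrite leq_eqVlt => /orP [/eqP->//|/IH h].
apply: Rt h _; case: (cfg_next t' ci) => [[_ [_ ->]]|[_ ->]]; auto.
Qed.

Definition grows (a b : lstate P V) :=
  [/\ {subset Sset a <= Sset b}, ackFrom a \subset ackFrom b,
      readyFrom a \subset readyFrom b & confFrom a \subset confFrom b].

Lemma grows_step (s : lstate P V) (e : event P V) : grows s (step s e).1.
Proof.
case: s => pr S0 T0 U0 sT d3 d5 d6 d7 dl pDS pDT aF rF cF dF.
case: sT; case: e => [i0|i0 j0 m0|i0 j0 t0 []|i0 []|] /=;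
  split => //= ; try (by move=> y; rewrite inE => ->; rewrite orbT); apply: subsetUr.
Qed.

Lemma grows_mono i t t' : correct F i -> t <= t' -> grows (cfg t i) (cfg t' i).
Proof.
move=> ci; apply: mono_gen => //.
- by move=> s; split.
- move=> a b c [h1 h2 h3 h4] [k1 k2 k3 k4]; split; first by move=> y /h1/k1.
  + exact: subset_trans h2 k2.
  + exact: subset_trans h3 k3.
  + exact: subset_trans h4 k4.
- exact: grows_step.
Qed.


Lemma ev_all (T : eqType) (f : nat -> T -> bool) :
  (forall t t' y, t <= t' -> f t y -> f t' y) ->
  forall s : seq T, (forall y, y \in s -> exists t, f t y) ->
  exists t, forall y, y \in s -> f t y.
Proof.
move=> fm; elim=> [|a s IH] h; first by exists 0.
have [ta fa] := h a (mem_head _ _).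
have [ts fs] : exists t, forall y, y \in s -> f t y.
  by apply: IH => y ys; apply: h; rewrite inE ys orbT.
exists (maxn ta ts) => y; rewrite inE => /orP [/eqP->|ys].
  by apply: fm fa; rewrite leq_maxl.
by apply: (fm ts); [rewrite leq_maxr | apply: fs].
Qed.

Definition fld (m : msg P V) (s : lstate P V) : {set P} :=
  match m with MAck => ackFrom s | MReady => readyFrom s | MConfirm => confFrom s
  | _ => set0 end.
Definition fld_ok (m : msg P V) : bool :=
  match m with MAck | MReady | MConfirm => true | _ => false end.

Lemma fld_mono m i t t' j : correct F i -> t <= t' -> j \in fld m (cfg t i) -> j \in fld m (cfg t' i).
Proof.
move=> ci le; have [_ h2 h3 h4] := grows_mono ci le.
by case: m => //= [/(subsetP h2)|/(subsetP h3)|/(subsetP h4)].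
Qed.

Lemma recv_fld m i j t0 : fld_ok m -> correct F i -> correct F j ->
  In (i, m) (out ev cfg t0 j) -> exists t, j \in fld m (cfg t i).
Proof.
move=> ok ci cj hin; have [t et] := ex_net Hex cj ci hin.
exists t.+1; case: (cfg_next t ci) => [[_ [_ ->]]|[h _]]; last by rewrite et in h.
rewrite et; case: (cfg t i) => pr S0 T0 U0 sT d3 d5 d6 d7 dl pDS pDT aF rF cF dF.
by clear hin et; case: m ok => //= _; rewrite setU11.
Qed.

Lemma recv_set m i (Q : {set P}) : fld_ok m -> correct F i ->
  (forall j, j \in Q -> correct F j /\ exists t0, In (i, m) (out ev cfg t0 j)) ->
  exists t, Q \subset fld m (cfg t i).
Proof.
move=> ok ci h.
have H : forall y, y \in enum Q -> exists t, y \in fld m (cfg t i).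
  move=> y; rewrite mem_enum => /h [cy [t0 hin]]; exact: recv_fld ok ci cy hin.
have [t ht] := @ev_all P (fun t j => j \in fld m (cfg t i))
  (fun t t' y le => fld_mono ci le) (enum Q) H.
by exists t; apply/subsetP => y yQ; apply: ht; rewrite mem_enum.
Qed.

Lemma flag_inv i (g : lstate P V -> bool) (a : act P) : correct F i ->
  g (@init_state P V) = false ->
  (forall s e, g (step s e).1 -> g s \/ exists j : P, e = EAct V j a) ->
  forall t, g (cfg t i) -> exists t', t' < t /\ ev t' = EAct V i a.
Proof.
move=> ci g0 gs; apply: (inv_gen (I := fun t s => g s -> exists t', t' < t /\ ev t' = EAct V i a)) => //.
- by rewrite g0.
- by move=> t s h /h [t' [lt e]]; exists t'; split => //; apply: ltnW.
move=> t hp _ IH /gs [/IH [t' [lt e]]|[j ej]]; first by exists t'; split => //; apply: ltnW.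
by exists t; split => //; rewrite ej in hp *; case: hp => ->.
Qed.

Lemma fire i a (g C : lstate P V -> bool) t : correct F i ->
  g (@init_state P V) = false ->
  (forall s e, g (step s e).1 -> g s \/ exists j : P, e = EAct V j a) ->
  (forall s, enabled (Qs i) s a = ~~ g s && C s) -> C (cfg t i) ->
  exists t', ev t' = EAct V i a.
Proof.
move=> ci g0 gs en Ct; case gt: (g (cfg t i)).
  by have [t' [_ e]] := flag_inv ci g0 gs gt; exists t'.
have en' : enabled (Qs i) (cfg t i) a by rewrite en gt Ct.
have [t' _ e] := @ex_fair _ _ _ _ _ _ _ _ Hex t i a ci en'.
by exists t'.
Qed.

Ltac dstep s e :=
  case: s => pr S0 T0 U0 [] d3 d5 d6 d7 dl pDS pDT aF rF cF dF;
  case: e => [i0|i0 j0 m0|i0 j0 n0 [S1| | | |T1]|i0 [|j1 t1|||||j1 t1|]|] /=.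

Lemma g_sentT (s : lstate P V) (e : event P V) : sentT (step s e).1 -> sentT s \/ exists j : P, e = EAct V j (@A8 P).
Proof. by dstep s e; eauto. Qed.
Lemma g_done3 s e : done3 (step s e).1 -> done3 s \/ exists j : P, e = EAct V j (@A3 P).
Proof. by dstep s e; eauto. Qed.
Lemma g_done5 s e : done5 (step s e).1 -> done5 s \/ exists j : P, e = EAct V j (@A5 P).
Proof. by dstep s e; eauto. Qed.
Lemma g_done6 s e : done6 (step s e).1 -> done6 s \/ exists j : P, e = EAct V j (@A6 P).
Proof. by dstep s e; eauto. Qed.
Lemma g_done7 s e : done7 (step s e).1 -> done7 s \/ exists j : P, e = EAct V j (@A7 P).
Proof. by dstep s e; eauto. Qed.


Lemma S_step (s : lstate P V) (e : event P V) y : y \in Sset (step s e).1 -> y \in Sset s \/ exists i' j, e = EArbDel i' j y.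
Proof.
dstep s e; move=> h; try by left.
all: move: h; rewrite inE => /orP [/eqP->|]; eauto.
Qed.

Lemma C_step (s : lstate P V) (e : event P V) y : y \in confFrom (step s e).1 ->
  y \in confFrom s \/ exists i' t0, e = ERecv i' y t0 (MConfirm P V).
Proof.
dstep s e; move=> h; try by left.
all: move: h; rewrite in_setU1 => /orP [/eqP->|]; eauto.
Qed.

Lemma D_step (s : lstate P V) (e : event P V) y : y \in pendDS (step s e).1 ->
  y \in pendDS s \/ exists i', e = ERecv i' y.1.1 y.1.2 (MDS y.2).
Proof.
dstep s e; move=> h; try by left.
all: move: h; rewrite ?inE ?mem_filter.
all: try by move=> /andP [_ ->]; left.
all: move=> /orP [/eqP->|]; eauto.
Qed.

Lemma S_inv i t y : correct F i -> y \in Sset (cfg t i) -> exists t' j, arb_del ev t' i j y.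
Proof.
move=> ci; move: t; apply: (inv_gen (I := fun _ s => y \in Sset s -> exists t' j, arb_del ev t' i j y)) => //.
move=> t hp _ IH /S_step [/IH hh|[i' [j e]]]; first exact: hh.
by exists t, j; rewrite /arb_del e; rewrite e /= in hp; case: hp => ->.
Qed.

Lemma conf_inv i j t : correct F i -> correct F j -> j \in confFrom (cfg t i) ->
  exists t0, In (i, MConfirm P V) (out ev cfg t0 j).
Proof.
move=> ci cj; move: t; apply: (inv_gen (I := fun _ s => j \in confFrom s -> exists t0, In (i, MConfirm P V) (out ev cfg t0 j))) => //.
  by rewrite /= in_set0.
move=> t hp al IH /C_step [/IH hh|[i' [t0 e]]]; first exact: hh.
move: al; rewrite /allowed e.
by move=> [jF|[_ h]]; [rewrite /correct jF in cj | exists t0].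
Qed.

Lemma pend_inv k j t0 S t : correct F k -> correct F j -> (j, t0, S) \in pendDS (cfg t k) ->
  In (k, MDS S) (out ev cfg t0 j).
Proof.
move=> ck cj; move: t; apply: (inv_gen (I := fun _ s => (j, t0, S) \in pendDS s -> In (k, MDS S) (out ev cfg t0 j))) => //.
move=> t hp al IH /D_step [/IH hh|[i' /= e]]; first exact: hh.
move: al; rewrite /allowed e.
by move=> [jF|[_ h]]; [rewrite /correct jF in cj | ].
Qed.

Lemma find_pend_in j t0 (pd : seq (P * nat * pset P V)) S :
  find_pend j t0 pd = Some S -> (j, t0, S) \in pd.
Proof.
rewrite /find_pend; elim: pd => //= [[[a b] c]] pd IH /=.
case: eqP => /= [[-> ->] [->]|_ /IH h]; rewrite inE ?eqxx //.
by rewrite h orbT.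
Qed.

Lemma find_pend_has j t0 (pd : seq (P * nat * pset P V)) :
  has (fun e => e.1 == (j, t0)) pd -> exists S, find_pend j t0 pd = Some S.
Proof.
rewrite /find_pend; elim: pd => //= e pd IH; case: ifP => /= [_ _|_ /IH //]; by eexists.
Qed.

Lemma pend_keep (s : lstate P V) (e : event P V) j t0 : has (fun y => y.1 == (j, t0)) (pendDS s) ->
  (forall i', e <> EAct V i' (A4 j t0)) -> has (fun y => y.1 == (j, t0)) (pendDS (step s e).1).
Proof.
dstep s e; move=> h ne; rewrite /= ?h ?orbT //.
all: move: h => /hasP [y yin ye]; apply/hasP; exists y => //.
all: rewrite mem_filter yin andbT (eqP ye).
all: apply/eqP => -[e1 e2]; subst; by case: (ne i0).
Qed.

Lemma step_conf (s : lstate P V) (e : event P V) p : In (p, MConfirm P V) (step s e).2 ->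
  forall k, In (k, MConfirm P V) (step s e).2.
Proof.
dstep s e; move=> h k //.
all: try (case: h => // [[]] //).
all: move: h => /In_bcast_inv ee; try discriminate ee; exact: In_bcast.
Qed.

Lemma out_conf j t0 p : In (p, MConfirm P V) (out ev cfg t0 j) ->
  forall k, In (k, MConfirm P V) (out ev cfg t0 j).
Proof. by rewrite /out; case: ifP => // _; apply: step_conf. Qed.

Lemma out_act i a t : ev t = EAct V i a -> out ev cfg t i = (step (cfg t i) (EAct V i a)).2.
Proof. by move=> e; rewrite /out e /= eqxx. Qed.


Definition Gm i := in_Gmax Fp Qs F i.

Lemma Gm_correct i : Gm i -> correct F i.
Proof. by case=> G [hG iG]; case: (hG i iG) => [[]]. Qed.

Lemma Gm_wise i : Gm i -> in_star (Fp i) F.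
Proof. by case=> G [hG iG]; case: (hG i iG) => [[]]. Qed.

Lemma Gm_quorum i : Gm i -> exists2 Q, Q \in Qs i & forall j, j \in Q -> Gm j.
Proof.
case=> G [hG iG]; case: (hG i iG) => _ /existsP [Q /andP [QQ sub]].
by exists Q => // j jQ; exists G; split => //; apply: (subsetP sub).
Qed.

Definition BC j := exists t0, forall k, In (k, MConfirm P V) (out ev cfg t0 j).

Lemma BC_A6 j t : ev t = EAct V j (A6 P) -> BC j.
Proof.
move=> e; exists t => k; rewrite (out_act e).
by case: (cfg t j) => * /=; apply: In_bcast.
Qed.

Lemma BC_A7 j t : ev t = EAct V j (A7 P) -> BC j.
Proof.
move=> e; exists t => k; rewrite (out_act e).
by case: (cfg t j) => * /=; apply: In_bcast.
Qed.

Lemma A8_out i t : ev t = EAct V i (A8 P) -> exists k T, In (k, MDT T) (out ev cfg t i).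
Proof.
move=> e; rewrite (out_act e).
by case: (cfg t i) => pr S0 T0 * /=; exists i, T0; apply: In_bcast.
Qed.

Lemma allowed_act i t a : correct F i -> ev t = EAct V i a -> enabled (Qs i) (cfg t i) a.
Proof.
move=> ci e; have ep : ev_proc (ev t) = Some i by rewrite e.
have [al _] := @ex_step _ _ _ _ _ _ _ _ Hex t i ci ep.
by move: al; rewrite /allowed e.
Qed.

Lemma A8_from_conf i : Gm i -> (forall j, Gm j -> BC j) -> exists t, ev t = EAct V i (A8 P).
Proof.
move=> gi hb; have ci := Gm_correct gi; have [Q QQ hQ] := Gm_quorum gi.
have [t sub] : exists t, Q \subset fld (MConfirm P V) (cfg t i).
  apply: recv_set => // j /hQ gj; split; first exact: Gm_correct.
  by have [t0 h] := hb j gj; exists t0; apply: h.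
apply: (@fire i (A8 P) (@sentT P V) (fun s => quorum_in (Qs i) (confFrom s)) t) => //.
- exact: g_sentT.
- by apply/existsP; exists Q; rewrite QQ.
Qed.

Lemma caseA p tp : Gm p -> ev tp = EAct V p (A8 P) -> forall j, Gm j -> BC j.
Proof.
move=> gp ep j gj; have cp := Gm_correct gp; have cj := Gm_correct gj.
move: (allowed_act cp ep) => /andP [_ /existsP [Qp /andP [QpQ sub]]].
set K := Qp :\: F.
have [t Ksub] : exists t, K \subset fld (MConfirm P V) (cfg t j).
  apply: recv_set => // y; rewrite inE => /andP [yF yQ]; split; first exact: yF.
  have [t0 h] := conf_inv cp yF (subsetP sub y yQ).
  by exists t0; apply: out_conf h j.
have ker : kernel_in (Qs j) (confFrom (cfg t j)).
  apply/existsP; exists K; rewrite Ksub andbT; apply/forallP => Q; apply/implyP => QQ.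
  have := (proj1 Hq) p j Qp Q F QpQ QQ (Gm_wise gp) (Gm_wise gj).
  move=> /subsetPn [y]; rewrite inE => /andP [a b] ynF.
  by apply/set0Pn; exists y; rewrite !inE ynF a b.
have [t' e] : exists t', ev t' = EAct V j (A7 P).
  apply: (@fire j (A7 P) (@done7 P V) (fun s => kernel_in (Qs j) (confFrom s)) t) => //.
  exact: g_done7.
exact: BC_A7 e.
Qed.

Lemma S_del k t j m : correct F k -> arb_del ev t k j m -> m \in Sset (cfg t.+1 k).
Proof.
move=> ck e; case: (cfg_next t ck) => [[_ [_ ->]]|[h _]]; last by rewrite e in h.
by rewrite e; case: (cfg t k) => * /=; rewrite mem_head.
Qed.

Lemma hasS_mono j (S S' : pset P V) : {subset S <= S'} -> hasS j S -> hasS j S'.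
Proof. by move=> sub /hasP [y yS yj]; apply/hasP; exists y => //; apply: sub. Qed.

Lemma B1 i : Gm i -> exists t0, ev t0 = EAct V i (A3 P).
Proof.
move=> gi; have ci := Gm_correct gi; have [Q QQ hQ] := Gm_quorum gi.
have [val [agr [tot _]]] := ex_arb Hex Hg.
have H : forall j, j \in enum Q -> exists t, hasS j (Sset (cfg t i)).
  move=> j; rewrite mem_enum => /hQ gj; have cj := Gm_correct gj.
  have [tj ej] := ex_propose Hex cj.
  have [t' h] := val tj j (j, x j) i cj (conj ej erefl) gi.
  exists t'.+1; apply/hasP; exists (j, x j) => //; exact: S_del ci h.
have [t ht] := @ev_all P (fun t j => hasS j (Sset (cfg t i)))
  (fun t t' y le => hasS_mono (let: And4 h _ _ _ := grows_mono ci le in h)) (enum Q) H.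
apply: (@fire i (A3 P) (@done3 P V)
  (fun s => [exists Q in Qs i, [forall j in Q, hasS j (Sset s)]]) t) => //.
- exact: g_done3.
- apply/existsP; exists Q; rewrite QQ /=; apply/forallP => j; apply/implyP => jQ.
  by apply: ht; rewrite mem_enum.
Qed.


Section CaseB.
Hypothesis HB : forall p t, Gm p -> ev t <> EAct V p (A8 P).

Lemma sentT_false p t : Gm p -> sentT (cfg t p) = false.
Proof.
move=> gp; apply/negbTE/negP => h.
have [t' [_ e]] := flag_inv (Gm_correct gp) (erefl false) (@g_sentT) h.
exact: HB gp e.
Qed.

Lemma B2 i k : Gm i -> Gm k -> exists t0, In (i, MAck P V) (out ev cfg t0 k).
Proof.
move=> gi gk; have ci := Gm_correct gi; have ck := Gm_correct gk.
have [val [agr [tot _]]] := ex_arb Hex Hg.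
have [t0 e0] := B1 gi.
set S0 := Sset (cfg t0 i).
have hout : forall k', In (k', MDS S0) (out ev cfg t0 i).
  by move=> k'; rewrite /S0 (out_act e0); case: (cfg t0 i) => * /=; apply: In_bcast.
have huniq : forall S, In (k, MDS S) (out ev cfg t0 i) -> S = S0.
  move=> S; rewrite /S0 (out_act e0); case: (cfg t0 i) => ? S1 ? ? ? ? ? ? ? ? ? ? ? ? ? ? /= /In_bcast_inv; by case.
have [t1 e1] := ex_net Hex ci ck (hout k).
have hp1 : has (fun y => y.1 == (i, t0)) (pendDS (cfg t1.+1 k)).
  case: (cfg_next t1 ck) => [[_ [_ ->]]|[h _]]; last by rewrite e1 in h.
  by rewrite e1; case: (cfg t1 k) => * /=; rewrite eqxx.
have H : forall y, y \in S0 -> exists t, y \in Sset (cfg t k).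
  move=> y /(S_inv ci) [t' [j h]].
  have [t'' [m' h']] := tot t' i j y k gi h gk.
  have eym := agr t' t'' i k j y m' gi gk h h'.
  by exists t''.+1; rewrite eym; apply: S_del ck h'.
have [t2 ht2] := @ev_all _ (fun t y => y \in Sset (cfg t k))
  (fun t t' y le => let: And4 h _ _ _ := grows_mono ck le in h y) S0 H.
have [t3 e3] : exists t3, ev t3 = EAct V k (A4 i t0).
  apply: NNPP => nE.
  have Hn : forall n, has (fun y => y.1 == (i, t0)) (pendDS (cfg (t1.+1 + n) k)).
    elim=> [|n IH]; first by rewrite addn0.
    rewrite addnS; case: (cfg_next (t1.+1 + n) ck) => [[hp [_ ->]]|[_ ->]] //.
    apply: pend_keep => // i' e; apply: nE; exists (t1.+1 + n).
    by rewrite e in hp *; case: hp => ->.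
  set T := t1.+1 + t2.
  have [S fS] := find_pend_has (Hn t2).
  have SS0 := huniq S (pend_inv ck ci (find_pend_in fS)).
  have en : enabled (Qs k) (cfg T k) (A4 i t0).
    rewrite /enabled fS SS0; apply/allP => y yS.
    have [h _ _ _] := grows_mono ck (leq_addl t1.+1 t2).
    exact: h _ (ht2 y yS).
  have [t' _ e'] := @ex_fair _ _ _ _ _ _ _ _ Hex T k (A4 i t0) ck en.
  by apply: nE; exists t'.
exists t3; have := sentT_false t3 gk; rewrite (out_act e3).
by case: (cfg t3 k) => pr S1 T1 U1 sT ? ? ? ? ? ? ? ? ? ? ? /= ->; left.
Qed.

Lemma B3 i : Gm i -> exists t, ev t = EAct V i (A5 P).
Proof.
move=> gi; have ci := Gm_correct gi; have [Q QQ hQ] := Gm_quorum gi.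
have [t sub] : exists t, Q \subset fld (MAck P V) (cfg t i).
  apply: recv_set => // j /hQ gj; split; first exact: Gm_correct.
  exact: B2 gi gj.
apply: (@fire i (A5 P) (@done5 P V) (fun s => quorum_in (Qs i) (ackFrom s)) t) => //.
- exact: g_done5.
- by apply/existsP; exists Q; rewrite QQ.
Qed.

Lemma B4 i : Gm i -> exists t, ev t = EAct V i (A6 P).
Proof.
move=> gi; have ci := Gm_correct gi; have [Q QQ hQ] := Gm_quorum gi.
have [t sub] : exists t, Q \subset fld (MReady P V) (cfg t i).
  apply: recv_set => // j /hQ gj; split; first exact: Gm_correct.
  have [t5 e5] := B3 gj; exists t5; rewrite (out_act e5).
  by case: (cfg t5 j) => * /=; apply: In_bcast.
apply: (@fire i (A6 P) (@done6 P V) (fun s => quorum_in (Qs i) (readyFrom s)) t) => //.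
- exact: g_done6.
- by apply/existsP; exists Q; rewrite QQ.
Qed.

End CaseB.

Lemma main i : Gm i -> exists t k T, In (k, MDT T) (out ev cfg t i).
Proof.
move=> gi.
have hBC : forall j, Gm j -> BC j.
  case: (classic (exists p t, Gm p /\ ev t = EAct V p (A8 P))) => [[p [t [gp e]]]|nA].
    exact: caseA gp e.
  have HB : forall p t, Gm p -> ev t <> EAct V p (A8 P).
    by move=> p t gp e; apply: nA; exists p, t.
  by move=> j gj; have [t e] := B4 HB gj; apply: BC_A6 e.
have [t e] := A8_from_conf gi hBC.
by have [k [T h]] := A8_out e; exists t, k, T.
Qed.

End Proof.

Theorem lemma3p6 (P : finType) (V : eqType) (Fp Qs : P -> {set {set P}})
  (F : {set P}) (x : P -> V) (ev : nat -> event P V) (cfg : nat -> P -> lstate P V) :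
  abqs Fp Qs ->
  AG_execution Fp Qs F x ev cfg ->
  has_guild Fp Qs F ->
  forall i, in_Gmax Fp Qs F i ->
  exists t k T, In (k, MDT T) (out ev cfg t i).
Proof.
move=> Hq Hex Hg i gi; exact: (main Hq Hex Hg gi).
Qed.
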